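(* Let $\Sigma$ be an alphabet containing at least two letters and let $f\colon\Sigma^*\to\Sigma^*$ be RCP. Then the integer $p_f=|f(c)|-|f(\varepsilon)|$ does not depend on the letter $c\in\Sigma$, and for all $x\in\Sigma^*$ and all $a\in\Sigma$, $$|f(x)|=p_f|x|+|f(\varepsilon)|,\qquad |f(x)|_a=p_f|x|_a+|f(\varepsilon)|_a.$$
   Context: $\Sigma^*$ is the free monoid over $\Sigma$ (finite words, concatenation, empty word $\varepsilon$); $|u|$ is the length of $u$ and $|u|_a$ the number of occurrences of the letter $a$ in $u$. A function $f\colon(\Sigma^* )^k\to\Sigma^*$ is RCP if for every monoid morphism $\varphi\colon\Sigma^*\to\Sigma^*$ and all $u_1,\ldots,u_k,v_1,\ldots,v_k$ with $\varphi(u_i)=\varphi(v_i)$ for all $i$, we have $\varphi(f(u_1,\ldots,u_k))=\varphi(f(v_1,\ldots,v_k))$. *)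

(* Defs.v *)
From mathcomp Require Import all_boot all_order all_algebra.
Set Implicit Arguments. Unset Strict Implicit. Unset Printing Implicit Defensive.

Definition monoid_morphism (Sigma : Type) (phi : seq Sigma -> seq Sigma) : Prop :=
  phi [::] = [::] /\ forall u v : seq Sigma, phi (u ++ v) = phi u ++ phi v.

Definition RCP1 (Sigma : Type) (f : seq Sigma -> seq Sigma) : Prop :=
  forall phi : seq Sigma -> seq Sigma, monoid_morphism phi ->
  forall u v : seq Sigma, phi u = phi v -> phi (f u) = phi (f v).

(* Main.v *)
Require Import Defs.
From mathcomp Require Import all_boot all_order all_algebra.
From mathcomp Require Import ring.
Import GRing.Theory.
Local Open Scope ring_scope.

Section Aux.
Variable Sigma : finType.

Definition phiP (P : pred Sigma) (a : Sigma) (s : seq Sigma) : seq Sigma :=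
  flatten (map (fun x => if P x then [:: a] else [::]) s).

Lemma phiP_mm P a : Defs.monoid_morphism (phiP P a).
Proof. split=> // u v; by rewrite /phiP map_cat flatten_cat. Qed.

Lemma phiP_nseq P a s : phiP P a s = nseq (count P s) a.
Proof. elim: s => //= x s IH; rewrite /phiP /= -/(phiP P a s) IH; by case: (P x). Qed.

Lemma rcp_count (f : seq Sigma -> seq Sigma) (P : pred Sigma) (a : Sigma) : RCP1 f ->
  forall u v, count P u = count P v -> count P (f u) = count P (f v).
Proof.
move=> H u v e.
have := H _ (phiP_mm P a) u v; rewrite !phiP_nseq e => /(_ erefl) /(congr1 size).
by rewrite !size_nseq.
Qed.

Lemma size_sum_count (s : seq Sigma) : size s = (\sum_(a : Sigma) count_mem a s)%N.
Proof.
elim: s => [|x s IH] /=; first by rewrite big1.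
rewrite big_split /= -IH (bigD1 x) //= eqxx big1 ?addn0 ?add1n // => i /negbTE.
by rewrite eq_sym => ->.
Qed.
End Aux.

Theorem mainTheorem6 (Sigma : finType) (f : seq Sigma -> seq Sigma) :
  (1 < #|Sigma|)%N -> RCP1 f ->
  exists p : int,
    (forall c : Sigma, (size (f [:: c]))%:Z - (size (f [::]))%:Z = p) /\
    (forall x : seq Sigma,
        (size (f x))%:Z = p * (size x)%:Z + (size (f [::]))%:Z /\
        (forall a : Sigma,
            (count_mem a (f x))%:Z = p * (count_mem a x)%:Z + (count_mem a (f [::]))%:Z)).
Proof.
move=> /card_gt1P [a0 [b0 [_ _ nab0]]] H.
pose Hc a i := count_mem a (f (nseq i a)).
have step1 : forall a x, count_mem a (f x) = Hc a (count_mem a x).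
  move=> a x; apply: (@rcp_count Sigma f (pred1 a) a H); by rewrite count_nseq /= eqxx mul1n.
have step2 : forall a b i j, a != b ->
    (Hc a i.+1 + Hc b j = Hc a i + Hc b j.+1)%N.
  move=> a b i j nab.
  have cnt : forall k l, (count_mem a (nseq k a ++ nseq l b) = k /\
                          count_mem b (nseq k a ++ nseq l b) = l)%N.
    move=> k l; rewrite !count_cat !count_nseq /= !eqxx eq_sym (negbTE nab).
    by rewrite !mul1n !mul0n addn0.
  have := @rcp_count Sigma f (predU (pred1 a) (pred1 b)) a H
            (nseq i.+1 a ++ nseq j b) (nseq i a ++ nseq j.+1 b).
  have Hi : forall s, count (predI (pred1 a) (pred1 b)) s = 0%N.
    move=> s; apply/eqP; rewrite -leqn0 leqNgt -has_count; apply/hasPn => x _ /=.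
    by apply/negP => /andP [/eqP -> /eqP e]; move: nab; rewrite e eqxx.
  have cU : forall s, count (predU (pred1 a) (pred1 b)) s = (count_mem a s + count_mem b s)%N.
    by move=> s; rewrite -count_predUI Hi addn0.
  rewrite !cU.
  have [c1 c2] := cnt i.+1 j; have [c3 c4] := cnt i j.+1.
  rewrite c1 c2 c3 c4 addSnnS => /(_ erefl).
  by rewrite !step1 c1 c2 c3 c4.
pose d a : int := (Hc a 1)%:Z - (Hc a 0)%:Z.
have lin : forall a b, a != b -> forall i, (Hc a i)%:Z = (Hc a 0)%:Z + i%:Z * d b.
  move=> a b nab; elim=> [|i IH]; first by rewrite mul0r addr0.
  have := step2 a b i 0%N nab; move/(congr1 Posz); rewrite !PoszD => e.
  have -> : (Hc a i.+1)%:Z = (Hc a i)%:Z + ((Hc b 1)%:Z - (Hc b 0)%:Z).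
    by apply: (addIr (Hc b 0)%:Z); rewrite e; ring.
  by rewrite IH /d -[i.+1]addn1 PoszD; ring.
have dab : forall a b, a != b -> d a = d b.
  move=> a b nab; have e := lin a b nab 1; rewrite /d in e *; by rewrite e mul1r addrAC subrr add0r.
have linp : forall a i, (Hc a i)%:Z = (Hc a 0)%:Z + i%:Z * d a0.
  move=> a i; have [->|na] := eqVneq a a0.
    by rewrite (lin a0 b0 nab0) (dab a0 b0 nab0).
  by rewrite (lin a a0 na).
have cntf : forall x a, (count_mem a (f x))%:Z =
                        d a0 * (count_mem a x)%:Z + (count_mem a (f [::]))%:Z.
  move=> x a; rewrite step1 linp (step1 a [::]) /=; ring.
have szf : forall x, (size (f x))%:Z = d a0 * (size x)%:Z + (size (f [::]))%:Z.
  move=> x; rewrite !size_sum_count -!natz !natr_sum mulr_sumr -big_split /=.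
  apply: eq_bigr => a _; rewrite !natz; exact: cntf.
exists (d a0); split; last by move=> x; split.
move=> c; rewrite szf /=; ring.
Qed.
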